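(* Let $u,a,b$ be positive integers with $u\le\min(a-1,b)$. Suppose integers $c_{pq},d_{pq}\in[1,a]$ ($1\le p\le u$, $1\le q\le b$) satisfy, for all $p,q$ for which the indices are in range, $$d_{pq}\ge c_{pq},\qquad c_{pq}\ge d_{p,q+1},\qquad c_{pq}>d_{p-1,q}.$$ Then there exist integers $c'_{pq},d'_{pq}$ ($1\le p\le u$, $1\le q\le b$) such that: (i) $d'_{pq}\ge c'_{pq}$ and $c'_{pq}>d'_{p-1,q}$ for all $p,q$ with indices in range; (ii) $c'_{pq}=d'_{p,q+1}$ for $1\le p\le u$, $1\le q\le b-1$; (iii) $d'_{p1}=a-u+p$ and $c'_{pb}=p$ for $1\le p\le u$; (iv) $\bigcup_p([c_{pq},d_{pq}]\cap\mathbb{Z})\subseteq\bigcup_p([c'_{pq},d'_{pq}]\cap\mathbb{Z})$ for each $q=1,\dots,b$; moreover, if this inclusion is an equality for every $q$, then $c_{pq}=c'_{pq}$ and $d_{pq}=d'_{pq}$ for all $p,q$. *)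

(* Defs.v *)
From Stdlib Require Export ZArith Lia.
Open Scope Z_scope.

Definition union_col (u : nat) (c d : nat -> nat -> Z) (q : nat) (x : Z) : Prop :=
  exists p : nat, (1 <= p <= u)%nat /\ c p q <= x <= d p q.

(* Main.v *)
Require Import Defs.
Local Open Scope bool_scope.
Local Open Scope Z_scope.

Fixpoint sumZ (f : nat -> Z) (n : nat) : Z :=
  match n with 0%nat => 0 | S k => sumZ f k + f (S k) end.

Lemma sumZ_ext f g n : (forall i, (1 <= i <= n)%nat -> f i = g i) -> sumZ f n = sumZ g n.
Proof. induction n; simpl; intros H; auto. rewrite IHn by (intros; apply H; lia). rewrite (H (S n)) by lia. reflexivity. Qed.

Lemma sumZ_add f g n : sumZ (fun i => f i + g i) n = sumZ f n + sumZ g n.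
Proof. induction n; simpl; lia. Qed.

Lemma sumZ_sub f g n : sumZ (fun i => f i - g i) n = sumZ f n - sumZ g n.
Proof. induction n; simpl; lia. Qed.

Lemma sumZ_const k n : sumZ (fun _ => k) n = Z.of_nat n * k.
Proof. induction n; simpl sumZ; lia. Qed.

Lemma sumZ_swap (f : nat -> nat -> Z) n m :
  sumZ (fun i => sumZ (fun j => f i j) m) n = sumZ (fun j => sumZ (fun i => f i j) n) m.
Proof.
  induction n; simpl.
  - rewrite (sumZ_const 0 m). lia.
  - rewrite IHn. rewrite (sumZ_add (fun j => sumZ (fun i => f i j) n) (fun j => f (S n) j)). reflexivity.
Qed.

Lemma sumZ_nonneg f n : (forall i, (1<=i<=n)%nat -> 0 <= f i) -> 0 <= sumZ f n.
Proof.
  induction n; simpl; intros H; [lia|].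
  assert (0 <= sumZ f n) by (apply IHn; intros; apply H; lia).
  specialize (H (S n) ltac:(lia)). lia.
Qed.

Lemma sumZ_nonneg_zero f n : (forall i, (1<=i<=n)%nat -> 0 <= f i) -> sumZ f n = 0 ->
  forall i, (1<=i<=n)%nat -> f i = 0.
Proof.
  induction n; simpl; intros H H0 i Hi; [lia|].
  assert (0 <= sumZ f n) by (apply sumZ_nonneg; intros; apply H; lia).
  assert (0 <= f (S n)) by (apply H; lia).
  destruct (Nat.eq_dec i (S n)). subst; lia.
  apply IHn; try lia. intros; apply H; lia.
Qed.

Lemma tele1 (g : nat -> Z) n : sumZ (fun q => g (q-1)%nat - g q + 1) n = g 0%nat - g n + Z.of_nat n.
Proof. induction n; simpl sumZ. lia. rewrite IHn, Nat.sub_0_r. lia. Qed.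

Lemma tele2 (c d : nat -> Z) k :
  sumZ (fun q => d q - c q + 1) (S k) + sumZ (fun q => c q - d (q+1)%nat) k
  = d 1%nat - c (S k) + Z.of_nat (S k).
Proof.
  induction k. simpl. lia.
  change (sumZ (fun q => d q - c q + 1) (S k) + (d (S (S k)) - c (S (S k)) + 1)
   + (sumZ (fun q => c q - d (q+1)%nat) k + (c (S k) - d (S k + 1)%nat)) = d 1%nat - c (S (S k)) + Z.of_nat (S (S k))).
  replace (S k + 1)%nat with (S (S k)) by lia. lia.
Qed.

Fixpoint cnt (f : Z -> bool) (n : nat) : Z :=
  match n with 0%nat => 0 | S k => cnt f k + (if f (Z.of_nat (S k)) then 1 else 0) end.

Lemma cnt_ext f g n : (forall i, (1<=i<=n)%nat -> f (Z.of_nat i) = g (Z.of_nat i)) -> cnt f n = cnt g n.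
Proof. induction n; cbn [cnt]; intros H; auto. rewrite IHn by (intros; apply H; lia). rewrite (H (S n)) by lia. reflexivity. Qed.

Lemma cnt_orb f g n : (forall i, (1<=i<=n)%nat -> f (Z.of_nat i) && g (Z.of_nat i) = false) ->
  cnt (fun v => f v || g v) n = cnt f n + cnt g n.
Proof.
  induction n; cbn [cnt]; intros H; auto. rewrite IHn by (intros; apply H; lia).
  specialize (H (S n) ltac:(lia)).
  destruct (f _), (g _); simpl in *; try discriminate; lia.
Qed.

Lemma cnt_seg l r n : 1 <= l -> cnt (fun v => (l <=? v) && (v <=? r)) n = Z.max 0 (Z.min r (Z.of_nat n) - l + 1).
Proof.
  intros Hl. induction n; cbn [cnt]. lia. rewrite IHn.
  destruct (Z.leb_spec l (Z.of_nat (S n))); destruct (Z.leb_spec (Z.of_nat (S n)) r); simpl; lia.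
Qed.

Lemma cnt_false n : cnt (fun _ => false) n = 0.
Proof. induction n; cbn [cnt]; lia. Qed.

Fixpoint memb (l r : nat -> Z) (m : nat) (v : Z) : bool :=
  match m with 0%nat => false | S k => memb l r k v || ((l (S k) <=? v) && (v <=? r (S k))) end.

Lemma memb_spec l r m v : memb l r m v = true <-> exists p, (1<=p<=m)%nat /\ l p <= v <= r p.
Proof.
  induction m; simpl.
  - split; [discriminate|]. intros [p [Hp _]]; lia.
  - rewrite Bool.orb_true_iff, IHm, Bool.andb_true_iff, Z.leb_le, Z.leb_le. split.
    + intros [[p [Hp H]]|H]. exists p; split; [lia|auto]. exists (S m); split; [lia|lia].
    + intros [p [Hp H]]. destruct (Nat.eq_dec p (S m)). subst; right; lia. left; exists p; split; [lia|auto].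
Qed.

Lemma memb_le l r m v : (forall p, (1<=p<=m)%nat -> l p <= r p) -> (forall p, (2<=p<=m)%nat -> r (p-1)%nat < l p) ->
  memb l r m v = true -> v <= r m.
Proof.
  induction m; simpl; intros H1 H2 H; [discriminate|].
  apply Bool.orb_true_iff in H. destruct H as [H|H].
  - destruct m. simpl in H; discriminate.
    assert (v <= r (S m)) by (apply IHm; [intros; apply H1; lia | intros; apply H2; lia | auto]).
    specialize (H2 (S (S m)) ltac:(lia)). specialize (H1 (S (S m)) ltac:(lia)).
    replace (S (S m) - 1)%nat with (S m) in H2 by lia. lia.
  - apply Bool.andb_true_iff in H. destruct H as [_ H]. apply Z.leb_le in H. auto.
Qed.

Lemma cnt_memb l r a m : (forall p, (1<=p<=m)%nat -> 1 <= l p /\ l p <= r p /\ r p <= Z.of_nat a) ->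
  (forall p, (2<=p<=m)%nat -> r (p-1)%nat < l p) ->
  cnt (memb l r m) a = sumZ (fun p => r p - l p + 1) m.
Proof.
  induction m; intros H1 H2.
  - simpl. apply cnt_false.
  - change (cnt (fun v => memb l r m v || ((l (S m) <=? v) && (v <=? r (S m)))) a = sumZ (fun p => r p - l p + 1) m + (r (S m) - l (S m) + 1)).
    rewrite cnt_orb. rewrite IHm; [| intros; apply H1; lia | intros; apply H2; lia].
    rewrite cnt_seg by (apply H1; lia). specialize (H1 (S m) ltac:(lia)). lia.
    intros i Hi. destruct (memb l r m (Z.of_nat i)) eqn:E; [|reflexivity]. simpl.
    destruct m; [simpl in E; discriminate|].
    apply memb_le in E; [| intros; apply H1; lia | intros; apply H2; lia].
    specialize (H2 (S (S m)) ltac:(lia)). replace (S (S m) - 1)%nat with (S m) in H2 by lia.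
    destruct (Z.leb_spec (l (S (S m))) (Z.of_nat i)); simpl; [lia|reflexivity].
Qed.

Definition Uf (a u b p q : nat) : Z :=
  if (p + b <=? u + q)%nat then Z.of_nat p else Z.of_nat a - Z.of_nat u + Z.of_nat p.
Definition Yf (a u b : nat) (c : nat -> nat -> Z) (p q : nat) : Z :=
  match q with 0%nat => Z.of_nat a - Z.of_nat u + Z.of_nat p | _ => Z.min (c p q) (Uf a u b p q) end.
Fixpoint Xf (a u b : nat) (c : nat -> nat -> Z) (p q : nat) {struct p} : Z :=
  match p with
  | S (S p0 as p1) => match q with S q0 => Z.max (Yf a u b c p q) (Xf a u b c p1 q0 + 1) | 0%nat => Yf a u b c p q end
  | _ => Yf a u b c p q
  end.

Lemma Xf_0 a u b c p : Xf a u b c p 0 = Yf a u b c p 0.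
Proof. destruct p as [|[|p]]; reflexivity. Qed.
Lemma Xf_1 a u b c q : Xf a u b c 1 q = Yf a u b c 1 q.
Proof. destruct q; reflexivity. Qed.
Lemma Xf_S a u b c p q : (2 <= p)%nat -> (1 <= q)%nat ->
  Xf a u b c p q = Z.max (Yf a u b c p q) (Xf a u b c (p-1) (q-1) + 1).
Proof.
  intros. destruct p as [|[|p]]; try lia. destruct q; try lia.
  replace (S (S p) - 1)%nat with (S p) by lia. replace (S q - 1)%nat with q by lia. reflexivity.
Qed.
Lemma Xf_geY a u b c p q : (1 <= p)%nat -> Yf a u b c p q <= Xf a u b c p q.
Proof.
  intros. destruct p as [|[|p]]; try lia. rewrite Xf_1; lia.
  destruct q. rewrite Xf_0; lia. rewrite Xf_S by lia. lia.
Qed.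
Lemma Yf_S a u b c p q : (1 <= q)%nat -> Yf a u b c p q = Z.min (c p q) (Uf a u b p q).
Proof. destruct q; [lia|reflexivity]. Qed.

Theorem lemma2p9 (u a b : nat) (c d : nat -> nat -> Z)
  (Hu : (1 <= u)%nat) (Ha : (1 <= a)%nat) (Hb : (1 <= b)%nat)
  (Huab : (u <= a - 1)%nat /\ (u <= b)%nat)
  (Hrange : forall p q, (1 <= p <= u)%nat -> (1 <= q <= b)%nat ->
     1 <= c p q <= Z.of_nat a /\ 1 <= d p q <= Z.of_nat a)
  (Hdc : forall p q, (1 <= p <= u)%nat -> (1 <= q <= b)%nat -> d p q >= c p q)
  (Hcd : forall p q, (1 <= p <= u)%nat -> (1 <= q)%nat -> (q + 1 <= b)%nat ->
     c p q >= d p (q + 1)%nat)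
  (Hcd' : forall p q, (2 <= p <= u)%nat -> (1 <= q <= b)%nat ->
     c p q > d (p - 1)%nat q) :
  exists c' d' : nat -> nat -> Z,
    (* (i) *)
    (forall p q, (1 <= p <= u)%nat -> (1 <= q <= b)%nat -> d' p q >= c' p q) /\
    (forall p q, (2 <= p <= u)%nat -> (1 <= q <= b)%nat ->
       c' p q > d' (p - 1)%nat q) /\
    (* (ii) *)
    (forall p q, (1 <= p <= u)%nat -> (1 <= q <= b - 1)%nat ->
       c' p q = d' p (q + 1)%nat) /\
    (* (iii) *)
    (forall p, (1 <= p <= u)%nat ->
       d' p 1%nat = Z.of_nat a - Z.of_nat u + Z.of_nat p /\
       c' p b = Z.of_nat p) /\
    (* (iv) *)
    (forall q, (1 <= q <= b)%nat ->
       forall x : Z, union_col u c d q x -> union_col u c' d' q x) /\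
    ((forall q, (1 <= q <= b)%nat ->
        forall x : Z, union_col u c d q x <-> union_col u c' d' q x) ->
     forall p q, (1 <= p <= u)%nat -> (1 <= q <= b)%nat ->
       c p q = c' p q /\ d p q = d' p q).
Proof.
  destruct Huab as [Hua Hub].
  assert (F1 : forall p q, (1<=p<=u)%nat -> (1<=q<=b)%nat -> c p q >= Z.of_nat p).
  { intros p q Hp Hq. induction p as [|p IH]; [lia|].
    destruct (Nat.eq_dec p 0). subst. specialize (Hrange 1%nat q Hp Hq); lia.
    specialize (IH ltac:(lia)). specialize (Hcd' (S p) q ltac:(lia) Hq).
    replace (S p - 1)%nat with p in Hcd' by lia. specialize (Hdc p q ltac:(lia) Hq). lia. }
  assert (F2 : forall k p q, (p + k = u)%nat -> (1 <= p)%nat -> (1<=q<=b)%nat ->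
            d p q <= Z.of_nat a - Z.of_nat u + Z.of_nat p).
  { induction k; intros p q Hk Hp Hq.
    - specialize (Hrange p q ltac:(lia) Hq). lia.
    - specialize (IHk (S p) q ltac:(lia) ltac:(lia) Hq). specialize (Hcd' (S p) q ltac:(lia) Hq).
      replace (S p - 1)%nat with p in Hcd' by lia. specialize (Hdc (S p) q ltac:(lia) Hq). lia. }
  assert (F2' : forall p q, (1<=p<=u)%nat -> (1<=q<=b)%nat -> d p q <= Z.of_nat a - Z.of_nat u + Z.of_nat p).
  { intros p q Hp Hq. apply (F2 (u - p)%nat); lia. }
  assert (F3 : forall k p q, (1<=p)%nat -> (p + k <= u)%nat -> (1<=q<=b)%nat ->
            c p q <= c (p+k)%nat q /\ d p q <= d (p+k)%nat q).
  { induction k; intros p q Hp Hk Hq.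
    - rewrite Nat.add_0_r. lia.
    - destruct (IHk p q Hp ltac:(lia) Hq). specialize (Hcd' (S (p+k)) q ltac:(lia) Hq).
      replace (S (p+k) - 1)%nat with (p+k)%nat in Hcd' by lia.
      replace (p + S k)%nat with (S (p+k)) by lia.
      pose proof (Hdc (p+k)%nat q ltac:(lia) Hq). pose proof (Hdc (S (p+k)) q ltac:(lia) Hq). lia. }
  assert (F3' : forall p p' q, (1<=p)%nat -> (p <= p')%nat -> (p' <= u)%nat -> (1<=q<=b)%nat ->
            c p q <= c p' q /\ d p q <= d p' q).
  { intros p p' q H1 H2 H3 H4. replace p' with (p + (p'-p))%nat by lia. apply F3; lia. }
  set (X := Xf a u b c).
  assert (X0 : forall p, X p 0%nat = Z.of_nat a - Z.of_nat u + Z.of_nat p).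
  { intros p. unfold X. rewrite Xf_0. reflexivity. }
  assert (YU : forall p q, (1 <= q)%nat -> Yf a u b c p q <= Uf a u b p q).
  { intros p q Hq. rewrite Yf_S by lia. lia. }
  assert (Ymono : forall p q, (1<=p<=u)%nat -> (1<=q<=b)%nat -> Yf a u b c p q <= Yf a u b c p (q-1)).
  { intros p q Hp Hq. destruct q as [|q]; [lia|]. replace (S q - 1)%nat with q by lia.
    destruct q as [|q].
    - specialize (YU p 1%nat ltac:(lia)). unfold Uf in YU. simpl Yf at 2.
      destruct (Nat.leb_spec (p + b) (u + 1)); lia.
    - rewrite !Yf_S by lia. specialize (Hcd p (S q) Hp ltac:(lia) ltac:(lia)).
      replace (S q + 1)%nat with (S (S q)) in Hcd by lia. specialize (Hdc p (S (S q)) Hp Hq).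
      unfold Uf. destruct (Nat.leb_spec (p + b) (u + S (S q))); destruct (Nat.leb_spec (p + b) (u + S q)); lia. }
  assert (L2 : forall p q, (2 <= p)%nat -> (1 <= q)%nat -> X p q >= X (p-1)%nat (q-1)%nat + 1).
  { intros p q Hp Hq. unfold X. rewrite (Xf_S a u b c p q) by lia. lia. }
  assert (L3 : forall p, (1<=p<=u)%nat -> forall q, (1<=q<=b)%nat -> X p q <= X p (q-1)%nat).
  { induction p as [|p IH]; intros Hp q Hq; [lia|].
    destruct (Nat.eq_dec p 0).
    - subst. unfold X. rewrite !Xf_1. apply Ymono; lia.
    - unfold X. rewrite (Xf_S a u b c (S p) q) by lia. apply Z.max_lub.
      + eapply Z.le_trans. apply Ymono; lia. apply Xf_geY; lia.
      + replace (S p - 1)%nat with p by lia. fold X.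
        destruct (Nat.eq_dec q 1).
        * subst. simpl. rewrite !X0. lia.
        * specialize (IH ltac:(lia) (q-1)%nat ltac:(lia)). specialize (L2 (S p) (q-1)%nat ltac:(lia) ltac:(lia)).
          replace (S p - 1)%nat with p in L2 by lia. lia. }
  assert (L4' : forall p q, (1<=p)%nat -> (1<=q)%nat -> (p + b <= u + q)%nat -> X p q <= Z.of_nat p).
  { induction p as [|p IH]; intros q Hp Hq Hc; [lia|].
    assert (Hy : Yf a u b c (S p) q <= Z.of_nat (S p)).
    { specialize (YU (S p) q Hq). unfold Uf in YU. destruct (Nat.leb_spec (S p + b) (u + q)); lia. }
    destruct (Nat.eq_dec p 0).
    - subst. unfold X. rewrite Xf_1. auto.
    - unfold X. rewrite (Xf_S a u b c (S p) q) by lia. fold X. apply Z.max_lub; auto.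
      replace (S p - 1)%nat with p by lia. destruct (Nat.eq_dec q 1); [lia|].
      specialize (IH (q-1)%nat ltac:(lia) ltac:(lia) ltac:(lia)). lia. }
  assert (L4 : forall p, (1<=p<=u)%nat -> X p b = Z.of_nat p).
  { intros p Hp. apply Z.le_antisymm. apply L4'; lia.
    eapply Z.le_trans; [|apply Xf_geY; lia]. rewrite Yf_S by lia. unfold Uf.
    destruct (Nat.leb_spec (p + b) (u + b)); [|lia]. specialize (F1 p b Hp ltac:(lia)). lia. }
  assert (L3g : forall p, (1<=p<=u)%nat -> forall k q, (q + k <= b)%nat -> X p (q+k)%nat <= X p q).
  { intros p Hp. induction k; intros q Hq. rewrite Nat.add_0_r; lia.
    specialize (IHk q ltac:(lia)). specialize (L3 p Hp (q + S k)%nat ltac:(lia)).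
    replace (q + S k - 1)%nat with (q + k)%nat in L3 by lia. lia. }
  assert (Lrange : forall p q, (1<=p<=u)%nat -> (q <= b)%nat -> 1 <= X p q <= Z.of_nat a).
  { intros p q Hp Hq. pose proof (L3g p Hp (b - q)%nat q ltac:(lia)).
    replace (q + (b - q))%nat with b in H by lia. rewrite L4 in H by lia.
    pose proof (L3g p Hp q 0%nat ltac:(lia)). simpl in H0. rewrite X0 in H0. lia. }
  exists (fun p q => X p q), (fun p q => X p (q-1)%nat).
  split; [|split; [|split; [|split; [|split]]]].
  - intros p q Hp Hq. specialize (L3 p Hp q Hq). lia.
  - intros p q Hp Hq. specialize (L2 p q ltac:(lia) ltac:(lia)). lia.
  - intros p q Hp Hq. simpl. rewrite Nat.add_sub. reflexivity.
  - intros p Hp. split. simpl. apply X0. apply L4; auto.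
  - intros q Hq x [p [Hp Hx]]. unfold union_col.
    assert (Cov : forall r, (1<=r<=u)%nat -> X r (q-1)%nat >= x ->
              exists p', (1<=p'<=u)%nat /\ X p' q <= x <= X p' (q-1)%nat).
    { induction r as [|r IH]; intros Hr Hxr; [lia|].
      assert (K : (r = 0%nat \/ X r (q-1)%nat < x) -> X (S r) q <= x).
      { intros Hk.
        assert (HY : Yf a u b c (S r) q <= x).
        { destruct (Z_le_gt_dec (Yf a u b c (S r) q) x) as [|HY]; [auto|exfalso].
          rewrite Yf_S in HY by lia.
          assert (c (S r) q > x) by lia. assert (Uf a u b (S r) q > x) by lia.
          destruct (Nat.le_gt_cases (S r) p).
          - pose proof (F3' (S r) p q ltac:(lia) ltac:(lia) ltac:(lia) Hq). lia.
          - destruct Hk as [Hk|Hk]; [lia|].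
            pose proof (F2' p q Hp Hq).
            destruct (Nat.eq_dec q 1).
            + subst q. simpl in Hk. rewrite X0 in Hk. lia.
            + pose proof (Xf_geY a u b c r (q-1)%nat ltac:(lia)). fold X in H3.
              rewrite Yf_S in H3 by lia.
              pose proof (Hcd r (q-1)%nat ltac:(lia) ltac:(lia) ltac:(lia)).
              replace (q - 1 + 1)%nat with q in H4 by lia.
              pose proof (F3' p r q ltac:(lia) ltac:(lia) ltac:(lia) Hq).
              unfold Uf in *.
              destruct (Nat.leb_spec (r + b) (u + (q-1))); destruct (Nat.leb_spec (S r + b) (u + q)); lia. }
        unfold X. destruct (Nat.eq_dec r 0) as [->|Hr0].
        - rewrite Xf_1. auto.
        - rewrite (Xf_S a u b c (S r) q) by lia. replace (S r - 1)%nat with r by lia. fold X.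
          apply Z.max_lub; auto. destruct Hk; lia. }
      destruct (Nat.eq_dec r 0) as [->|Hr0].
      - exists 1%nat. split; [lia|]. split; [apply K; auto|lia].
      - destruct (Z_le_gt_dec x (X r (q-1)%nat)).
        + apply IH; lia.
        + exists (S r). split; [lia|]. split; [apply K; right; lia|lia]. }
    apply (Cov u); [lia|].
    pose proof (Xf_geY a u b c u (q-1)%nat ltac:(lia)). fold X in H.
    pose proof (F3' p u q ltac:(lia) ltac:(lia) ltac:(lia) Hq).
    pose proof (Hrange p q Hp Hq).
    destruct (Nat.eq_dec q 1).
    + subst q. simpl. rewrite X0. lia.
    + rewrite Yf_S in H by lia. unfold Uf in H.
      destruct (Nat.leb_spec (u + b) (u + (q-1))); [lia|].
      pose proof (Hcd u (q-1)%nat ltac:(lia) ltac:(lia) ltac:(lia)).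
      replace (q - 1 + 1)%nat with q in H3 by lia. lia.
  - intros Heq.
    assert (Hcol : forall q, (1<=q<=b)%nat ->
      sumZ (fun p => d p q - c p q + 1) u = sumZ (fun p => X p (q-1)%nat - X p q + 1) u).
    { intros q Hq.
      assert (E1 : cnt (memb (fun p => c p q) (fun p => d p q) u) a = sumZ (fun p => d p q - c p q + 1) u).
      { apply cnt_memb.
        - intros p Hp. pose proof (Hrange p q Hp Hq). pose proof (Hdc p q Hp Hq). lia.
        - intros p Hp. pose proof (Hcd' p q Hp Hq). lia. }
      assert (E2 : cnt (memb (fun p => X p q) (fun p => X p (q-1)%nat) u) a = sumZ (fun p => X p (q-1)%nat - X p q + 1) u).
      { apply cnt_memb.
        - intros p Hp. pose proof (Lrange p q Hp ltac:(lia)). pose proof (Lrange p (q-1)%nat Hp ltac:(lia)).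
          pose proof (L3 p Hp q Hq). lia.
        - intros p Hp. cbv beta. pose proof (L2 p q ltac:(lia) ltac:(lia)). lia. }
      rewrite <- E1, <- E2. apply cnt_ext. intros i Hi. apply Bool.eq_iff_eq_true.
      rewrite !memb_spec. apply (Heq q Hq). }
    assert (Htot : sumZ (fun q => sumZ (fun p => d p q - c p q + 1) u) b
                 = sumZ (fun q => sumZ (fun p => X p (q-1)%nat - X p q + 1) u) b).
    { apply sumZ_ext. intros; apply Hcol; lia. }
    assert (S1 : sumZ (fun p => sumZ (fun q => d p q - c p q + 1) b) u
               = sumZ (fun p => sumZ (fun q => X p (q-1)%nat - X p q + 1) b) u).
    { transitivity (sumZ (fun q => sumZ (fun p => d p q - c p q + 1) u) b).
      apply (sumZ_swap (fun p q => d p q - c p q + 1)).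
      rewrite Htot. symmetry. apply (sumZ_swap (fun p q => X p (q-1)%nat - X p q + 1)). }
    set (K := Z.of_nat a - Z.of_nat u + Z.of_nat b).
    set (def := fun p => (Z.of_nat a - Z.of_nat u + Z.of_nat p - d p 1%nat) + (c p b - Z.of_nat p)
                 + sumZ (fun q => c p q - d p (q+1)%nat) (b-1)).
    assert (SX : forall p, (1<=p<=u)%nat -> sumZ (fun q => X p (q-1)%nat - X p q + 1) b = K).
    { intros p Hp. rewrite (tele1 (X p)). rewrite X0, L4 by lia. unfold K. lia. }
    assert (SO : forall p, (1<=p<=u)%nat -> sumZ (fun q => d p q - c p q + 1) b = K - def p).
    { intros p Hp. pose proof (tele2 (c p) (d p) (b-1)). replace (S (b-1)) with b in H by lia.
      unfold def, K. lia. }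
    rewrite (sumZ_ext _ (fun p => K - def p) u) in S1 by (intros; apply SO; lia).
    rewrite (sumZ_ext (fun p => sumZ (fun q => X p (q-1)%nat - X p q + 1) b) (fun p => K) u) in S1 by (intros; apply SX; lia).
    rewrite sumZ_sub in S1.
    assert (Sg : forall p, (1<=p<=u)%nat -> 0 <= sumZ (fun q => c p q - d p (q+1)%nat) (b-1)).
    { intros p Hp. apply sumZ_nonneg. intros q Hq. pose proof (Hcd p q Hp ltac:(lia) ltac:(lia)). lia. }
    assert (Dz : forall p, (1<=p<=u)%nat -> def p = 0).
    { apply sumZ_nonneg_zero; [|lia].
      intros p Hp. unfold def. pose proof (F2' p 1%nat Hp ltac:(lia)). pose proof (F1 p b Hp ltac:(lia)).
      pose proof (Sg p Hp). lia. }
    assert (G1 : forall p, (1<=p<=u)%nat -> c p b = Z.of_nat p).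
    { intros p Hp. pose proof (Dz p Hp). unfold def in H. pose proof (F2' p 1%nat Hp ltac:(lia)).
      pose proof (F1 p b Hp ltac:(lia)). pose proof (Sg p Hp). lia. }
    assert (G2 : forall p, (1<=p<=u)%nat -> d p 1%nat = Z.of_nat a - Z.of_nat u + Z.of_nat p).
    { intros p Hp. pose proof (Dz p Hp). unfold def in H. pose proof (F2' p 1%nat Hp ltac:(lia)).
      pose proof (F1 p b Hp ltac:(lia)). pose proof (Sg p Hp). lia. }
    assert (G3 : forall p q, (1<=p<=u)%nat -> (1<=q<=b-1)%nat -> c p q = d p (q+1)%nat).
    { intros p q Hp Hq. pose proof (Dz p Hp). unfold def in H. pose proof (F2' p 1%nat Hp ltac:(lia)).
      pose proof (F1 p b Hp ltac:(lia)). pose proof (Sg p Hp).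
      assert (sumZ (fun q => c p q - d p (q+1)%nat) (b-1) = 0) by lia.
      pose proof (sumZ_nonneg_zero (fun q => c p q - d p (q+1)%nat) (b-1)).
      cbv beta in H4. specialize (H4 ltac:(intros; pose proof (Hcd p i Hp ltac:(lia) ltac:(lia)); lia) H3 q Hq). lia. }
    assert (GB : forall k p q, (1<=p<=u)%nat -> (q + k = b)%nat -> (1<=q)%nat -> (p + b <= u + q)%nat ->
                  c p q <= Z.of_nat p).
    { induction k; intros p q Hp Hk Hq Hc.
      - rewrite Nat.add_0_r in Hk. subst q. rewrite G1 by lia. lia.
      - rewrite (G3 p q Hp ltac:(lia)).
        pose proof (Hcd' (S p) (q+1)%nat ltac:(lia) ltac:(lia)). replace (S p - 1)%nat with p in H by lia.
        pose proof (IHk (S p) (q+1)%nat ltac:(lia) ltac:(lia) ltac:(lia) ltac:(lia)). lia. }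
    assert (GX : forall p, (1<=p<=u)%nat -> forall q, (1<=q<=b)%nat -> X p q = c p q).
    { induction p as [|p IH]; intros Hp q Hq; [lia|].
      assert (HY : Yf a u b c (S p) q = c (S p) q).
      { rewrite Yf_S by lia. unfold Uf. destruct (Nat.leb_spec (S p + b) (u + q)).
        - pose proof (GB (b - q)%nat (S p) q Hp ltac:(lia) ltac:(lia) H). lia.
        - pose proof (F2' (S p) q Hp Hq). pose proof (Hdc (S p) q Hp Hq). lia. }
      unfold X. destruct (Nat.eq_dec p 0) as [->|Hp0].
      - rewrite Xf_1. auto.
      - rewrite (Xf_S a u b c (S p) q) by lia. replace (S p - 1)%nat with p by lia. fold X.
        rewrite HY. apply Z.max_l.
        pose proof (Hcd' (S p) q ltac:(lia) Hq). replace (S p - 1)%nat with p in H by lia.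
        destruct (Nat.eq_dec q 1).
        + subst q. simpl. rewrite X0. rewrite G2 in H by lia. lia.
        + rewrite IH by lia. rewrite G3 by lia. replace (q - 1 + 1)%nat with q by lia. lia. }
    intros p q Hp Hq. split.
    + cbv beta. rewrite GX; auto.
    + cbv beta. destruct (Nat.eq_dec q 1).
      * subst q. simpl. rewrite X0, G2; auto.
      * rewrite GX by lia. rewrite G3 by lia. replace (q - 1 + 1)%nat with q by lia. reflexivity.
Qed.
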